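(* Let $A\in\mathbb R^{(m-1)\times n}$, $b\in\mathbb R^{m-1}$, $c\in\mathbb R^n$, $d\in\mathbb R$, and let $\mathcal S=\{x\in\mathbb R^n:\|Ax-b\|_2\le c^Tx-d\}$. Assume $\mathcal S\neq\emptyset$, $A^TA-cc^T$ is positive semidefinite, and $\begin{bmatrix}b\\ d\end{bmatrix}$ is not in the image (column space) of $\begin{bmatrix}A\\ c^T\end{bmatrix}$. Then $$\mathcal S=\{x\in\mathbb R^n: x^T(A^TA-cc^T)x-2(A^Tb-cd)^Tx+b^Tb-d^2\le0\}.$$ *)

(* Defs.v *)
(* matrices over an arbitrary real closed field R (covers the reals). *)
From mathcomp Require Import all_boot all_order all_algebra.
Set Implicit Arguments. Unset Strict Implicit. Unset Printing Implicit Defensive.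
Import Order.TTheory GRing.Theory Num.Theory.
Local Open Scope ring_scope.

Definition norm2 (R : rcfType) (k : nat) (v : 'cV[R]_k) : R :=
  Num.sqrt (\sum_(i < k) v i 0 ^+ 2).

Definition psd (R : rcfType) (n : nat) (M : 'M[R]_n) : Prop :=
  forall v : 'cV[R]_n, 0 <= (v^T *m M *m v) 0 0.

Definition soc_set (R : rcfType) (p n : nat) (A : 'M[R]_(p, n)) (b : 'cV[R]_p)
  (c : 'cV[R]_n) (d : R) (x : 'cV[R]_n) : Prop :=
  norm2 (A *m x - b) <= (c^T *m x) 0 0 - d.

Definition quad_set (R : rcfType) (p n : nat) (A : 'M[R]_(p, n)) (b : 'cV[R]_p)
  (c : 'cV[R]_n) (d : R) (x : 'cV[R]_n) : Prop :=
  (x^T *m (A^T *m A - c *m c^T) *m x) 0 0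
  - 2 * ((A^T *m b - d *: c)^T *m x) 0 0
  + (b^T *m b) 0 0 - d ^+ 2 <= 0.

(* Main.v *)
Require Import Defs.
From mathcomp Require Import all_boot all_order all_algebra.
From mathcomp Require Import ring lra.
Import Order.TTheory GRing.Theory Num.Theory.
Local Open Scope ring_scope.
Set Implicit Arguments. Unset Strict Implicit.

Section H.
Variable R : rcfType.

Definition dot k (u w : 'cV[R]_k) : R := (u^T *m w) 0 0.

Lemma dotE k (u w : 'cV[R]_k) : dot u w = \sum_i u i 0 * w i 0.
Proof. by rewrite /dot mxE; apply: eq_bigr => i _; rewrite mxE. Qed.

Lemma dotC k (u w : 'cV[R]_k) : dot u w = dot w u.
Proof. by rewrite !dotE; apply: eq_bigr => i _; rewrite mulrC. Qed.

Lemma dotDl k (u v w : 'cV[R]_k) : dot (u + v) w = dot u w + dot v w.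
Proof. by rewrite !dotE -big_split; apply: eq_bigr => i _; rewrite mxE mulrDl. Qed.

Lemma dotZl k a (u w : 'cV[R]_k) : dot (a *: u) w = a * dot u w.
Proof. by rewrite !dotE mulr_sumr; apply: eq_bigr => i _; rewrite mxE mulrA. Qed.

Lemma dotNl k (u w : 'cV[R]_k) : dot (- u) w = - dot u w.
Proof. by rewrite -scaleN1r dotZl mulN1r. Qed.

Lemma dot_ge0 k (u : 'cV[R]_k) : 0 <= dot u u.
Proof. by rewrite dotE; apply: sumr_ge0 => i _; rewrite -expr2 sqr_ge0. Qed.

Lemma dot_eq0 k (u : 'cV[R]_k) : dot u u = 0 -> u = 0.
Proof.
rewrite dotE => /eqP; rewrite psumr_eq0; last by move=> i _; rewrite -expr2 sqr_ge0.
move=> /allP H; apply/matrixP => i j; rewrite ord1 mxE.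
have := H i (mem_index_enum _); rewrite /= -expr2 sqrf_eq0 => /eqP //.
Qed.

Lemma norm2_dot k (u : 'cV[R]_k) : norm2 u = Num.sqrt (dot u u).
Proof. by rewrite /norm2 dotE; congr Num.sqrt; apply: eq_bigr => i _; rewrite expr2. Qed.

Lemma norm_le k (u : 'cV[R]_k) s : (norm2 u <= s) <-> (0 <= s /\ dot u u <= s ^+ 2).
Proof.
have E : 0 <= s -> (norm2 u <= s) = (dot u u <= s ^+ 2).
  move=> s0; have e : s = Num.sqrt (s ^+ 2) by rewrite sqrtr_sqr ger0_norm.
  by rewrite norm2_dot {1}e ler_sqrt // sqr_ge0.
split.
- move=> H; have s0 : 0 <= s by apply: le_trans H; rewrite /norm2 sqrtr_ge0.
  by split=> //; rewrite -E.
- by case=> s0 H; rewrite E.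
Qed.

Lemma mx11 (M : 'M[R]_1) (N : 'M[R]_(1,1)) : M 0 0 = N 0 0 -> M = N.
Proof. by move=> H; apply/matrixP => i j; rewrite !ord1. Qed.

Lemma mul11 (M N : 'M[R]_1) : (M *m N) 0 0 = M 0 0 * N 0 0.
Proof. by rewrite mxE big_ord1. Qed.

Lemma quadE p n (A : 'M[R]_(p, n)) b c d x :
  quad_set A b c d x <-> dot (A *m x - b) (A *m x - b) - ((c^T *m x) 0 0 - d) ^+ 2 <= 0.
Proof.
rewrite /quad_set.
have -> : (x^T *m (A^T *m A - c *m c^T) *m x) 0 0
          = dot (A *m x) (A *m x) - (c^T *m x) 0 0 ^+ 2.
  have -> : x^T *m (A^T *m A - c *m c^T) *m x
      = (A *m x)^T *m (A *m x) - (c^T *m x)^T *m (c^T *m x).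
    by rewrite mulmxBr mulmxBl !trmx_mul trmxK !mulmxA.
  by rewrite [in LHS]mxE [X in _ + X]mxE mul11 [(_^T) 0 0]mxE -expr2.
have -> : ((A^T *m b - d *: c)^T *m x) 0 0 = dot (A *m x) b - d * (c^T *m x) 0 0.
  have -> : (A^T *m b - d *: c)^T *m x = b^T *m (A *m x) - d *: (c^T *m x).
    by rewrite linearB /= linearZ /= mulmxBl -scalemxAl trmx_mul trmxK mulmxA.
  rewrite mxE [X in _ + X]mxE [X in _ - X]mxE dotC.
  by rewrite /dot.
have -> : (b^T *m b) 0 0 = dot b b by [].
rewrite !dotDl !dotNl [dot (A *m x) (_ - _)]dotC [dot b (_ - _)]dotC !dotDl !dotNl [dot b (A *m x)]dotC.
split => H; lra.
Qed.

Lemma dotDr k (u v w : 'cV[R]_k) : dot w (u + v) = dot w u + dot w v.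
Proof. by rewrite dotC dotDl !(dotC w). Qed.

Lemma dotZr k a (u w : 'cV[R]_k) : dot w (a *: u) = a * dot w u.
Proof. by rewrite dotC dotZl dotC. Qed.

Lemma dot_exp k (u w : 'cV[R]_k) l :
  dot (u + l *: w) (u + l *: w) = dot u u + 2 * l * dot u w + l ^+ 2 * dot w w.
Proof. rewrite !dotDl !dotDr !dotZl !dotZr (dotC w u); ring. Qed.

Lemma quadform p n (A : 'M[R]_(p, n)) (c v : 'cV[R]_n) :
  (v^T *m (A^T *m A - c *m c^T) *m v) 0 0 = dot (A *m v) (A *m v) - (c^T *m v) 0 0 ^+ 2.
Proof.
  have -> : v^T *m (A^T *m A - c *m c^T) *m v
      = (A *m v)^T *m (A *m v) - (c^T *m v)^T *m (c^T *m v).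
    by rewrite mulmxBr mulmxBl !trmx_mul trmxK !mulmxA.
  by rewrite [in LHS]mxE [X in _ + X]mxE mul11 [(_^T) 0 0]mxE -expr2.
Qed.

Lemma core (a0 a1 a2 s0 r l : R) :
  a0 - s0 ^+ 2 <= 0 -> a0 + 2 * a1 + a2 - (s0 + r) ^+ 2 <= 0 -> 0 <= a2 - r ^+ 2 ->
  0 <= l -> l <= 1 -> a0 + 2 * l * a1 + l ^+ 2 * a2 - (s0 + l * r) ^+ 2 <= 0.
Proof.
move=> h0 h1 q l0 l1.
have -> : a0 + 2 * l * a1 + l ^+ 2 * a2 - (s0 + l * r) ^+ 2 =
  (1 - l) * (a0 - s0 ^+ 2) + l * (a0 + 2 * a1 + a2 - (s0 + r) ^+ 2)
  - (l * (1 - l)) * (a2 - r ^+ 2) by ring.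
have t1 : (1 - l) * (a0 - s0 ^+ 2) <= 0 by rewrite mulr_ge0_le0 //; lra.
have t2 : l * (a0 + 2 * a1 + a2 - (s0 + r) ^+ 2) <= 0 by rewrite mulr_ge0_le0.
have t3 : 0 <= (l * (1 - l)) * (a2 - r ^+ 2).
  by rewrite mulr_ge0 // mulr_ge0 //; lra.
lra.
Qed.
End H.

Theorem lemma5p2 (R : rcfType) (p n : nat) (A : 'M[R]_(p, n)) (b : 'cV[R]_p)
    (c : 'cV[R]_n) (d : R) :
  (exists x : 'cV[R]_n, soc_set A b c d x) ->
  psd (A^T *m A - c *m c^T) ->
  ~ (exists y : 'cV[R]_n, col_mx A c^T *m y = col_mx b (d%:M : 'cV[R]_1)) ->
  forall x : 'cV[R]_n, soc_set A b c d x <-> quad_set A b c d x.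
Proof.
move=> [x0 Hx0] Hpsd Hnr x; split.
  by move/norm_le => [s0 H]; apply/quadE; rewrite subr_le0.
move/quadE => Hq; apply/norm_le; split; last by rewrite -subr_le0.
case: (lerP 0 ((c^T *m x) 0 0 - d)) => // Hs; exfalso; apply: Hnr.
move/norm_le: Hx0 => [s00 H0].
set v := x - x0.
have q := Hpsd v; rewrite quadform in q.
have aff : forall l, A *m (x0 + l *: v) - b = (A *m x0 - b) + l *: (A *m v).
  by move=> l; rewrite mulmxDr -scalemxAr addrAC.
have affc : forall l, (c^T *m (x0 + l *: v)) 0 0 - d
    = ((c^T *m x0) 0 0 - d) + l * (c^T *m v) 0 0.
  by move=> l; rewrite mulmxDr -scalemxAr !mxE; ring.
have ex : x = x0 + 1 *: v by rewrite scale1r addrC subrK.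
move: Hq Hs; rewrite ex aff affc dot_exp => Hq Hs.
set s0 := (c^T *m x0) 0 0 - d in s00 H0 Hs Hq affc.
set r := (c^T *m v) 0 0 in q Hs Hq affc.
have r0 : r < 0 by lra.
set l := s0 / (- r).
have hl : s0 + l * r = 0 by rewrite /l; field; rewrite ?oppr_eq0 lt_eqF.
have l0 : 0 <= l by rewrite /l divr_ge0 // oppr_ge0 ltW.
have l1 : l <= 1 by rewrite /l ler_pdivrMr ?oppr_gt0 // mul1r; lra.
rewrite mulr1 expr1n !mul1r in Hq Hs.
have H0' : dot (A *m x0 - b) (A *m x0 - b) - s0 ^+ 2 <= 0 by rewrite subr_le0.
have gz := core H0' Hq q l0 l1.
rewrite hl expr0n /= subr0 -dot_exp -aff in gz.
have z0 : A *m (x0 + l *: v) - b = 0.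
  by apply: dot_eq0; apply/eqP; rewrite eq_le gz dot_ge0.
exists (x0 + l *: v); rewrite mul_col_mx; congr col_mx.
  by apply/eqP; rewrite -subr_eq0; apply/eqP.
apply/matrixP => i j; rewrite !ord1 [RHS]mxE mulr1n.
by apply/eqP; rewrite -subr_eq0 affc hl.
Qed.
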